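(* Let Assumptions 1 and 2 hold and consider the EPS model with AGC. Take as input $\boldsymbol u_1:=-\boldsymbol p^H=(-p_i^H)_{i\in\mathcal E^{HP}}$ and as output $\boldsymbol y_1:=\boldsymbol\omega^{HP}=(\omega_i)_{i\in\mathcal E^{HP}}$. Then the EPS is strictly passive from $\boldsymbol u_1$ to $\boldsymbol y_1$: there exist a storage function $V_e\ge 0$ of the EPS state $(\boldsymbol x_\theta,\boldsymbol\omega,\boldsymbol P^G,g)$ and a constant $\rho_e>0$ such that along all trajectories $$\dot V_e\le \boldsymbol y_1^\top\boldsymbol u_1-\rho_e\|\boldsymbol y_1\|^2 .$$
   Context: Electric power system (EPS); all variables are deviations from a nominal steady state. The set of buses is $\mathcal E=\mathcal E^{DG}\cup\mathcal E^{HP}$ (disjoint union), $n^{\mathcal E}=|\mathcal E|$, with a distinguished reference bus $r\in\mathcal E$; $\mathcal E^{HP}$ are the buses hosting heat pumps (HPs), $n^{HP}=|\mathcal E^{HP}|$. For each bus $i$: frequency deviation $\omega_i$, phase angle $\theta_i$ with $\dot\theta_i=\omega_i$, inertia $M_i>0$, damping $D_i>0$, controllable generation $P_i^G$, control input $u_i$, load disturbance $P_i^L$, constant voltage magnitude $V_i>0$, line susceptances $B_{ij}$. Dynamics: $T_{g,i}\dot P_i^G=-P_i^G+u_i$ with $T_{g,i}>0$, $i\in\mathcal E$; $M_i\dot\omega_i=-D_i\omega_i-P_i+P_i^G$ for $i\in\mathcal E^{DG}$; $M_i\dot\omega_i=-D_i\omega_i-P_i+P_i^G-p_i^H$ for $i\in\mathcal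 E^{HP}$, where $p_i^H$ is the electric power consumed by the HP at bus $i$; $P_i=\sum_j|B_{ij}|V_iV_j\sin(\theta_i-\theta_j)-P_i^L$; $\boldsymbol x_\theta=\boldsymbol R_I\boldsymbol\theta$ (angle differences), so $\dot{\boldsymbol x}_\theta=\boldsymbol R_I\boldsymbol\omega$, with $\boldsymbol R_I=[\boldsymbol I_{n^{\mathcal E}-1},\,-\boldsymbol 1_{n^{\mathcal E}-1}]$; AGC: $\dot g=-\omega_r$, $u_i=-K_i^P\omega_i+\delta_{ir}K^Ig$, with droop gains $K_i^P>0$, AGC gain $K^I>0$, and $\delta_{ir}=1$ if $i=r$, $0$ otherwise. Assumption 1: for any constant $\bar{\boldsymbol P}^L$ and $\bar{\boldsymbol p}^H$, the EPS (generation, swing, power-flow and angle equations) admits an equilibrium $(\boldsymbol x_\theta^*,\boldsymbol\theta^*,\boldsymbol\omega^*,\boldsymbol P^{G*},\boldsymbol P^*,\boldsymbol u^* )$ with $\boldsymbol\omega^*=\omega^{com}\boldsymbol 1_{n^{\mathcal E}}$ for some common frequency $\omega^{com}\in\mathbb R$. Assumption 2: $D_i\ge D_{\min}>0$ for all $i\in\mathcal E$, and for each $i$ the transfer function from $-\omega_i$ to $P_i^G$ (including damping), $G_i(s)=D_i+\frac{K_i^P}{T_{g,i}s+1}+\delta_{ir}\frac{K^I}{s(T_{g,i}s+1)}$, is strictly positive real in the sense that there is $\rho_i>0$ with $\operatorname{Re}G_i(j\omega)\ge\rho_i$ for all $\omega\in\mathbb R$. $\|\cdot\|$ is the Euclidean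 norm. *)

(* Defs.v *)
From HB Require Import structures.
From mathcomp Require Import all_boot all_order all_algebra.
From mathcomp Require Import all_classical all_reals all_analysis.
From mathcomp Require Import complex.
Set Implicit Arguments. Unset Strict Implicit. Unset Printing Implicit Defensive.
Import Order.TTheory GRing.Theory Num.Theory.
Local Open Scope ring_scope.

Section EPS.
Variable R : realType.
Variable n : nat.
(* buses are 'I_n.+1 (n^E = n+1 >= 1, since the reference bus r exists) *)
Local Notation bus := 'I_n.+1.

Definition ind (b : bool) : R := if b then 1 else 0.

Definition power_flow (B : bus -> bus -> R) (Vm : bus -> R)
  (theta : bus -> R) (PL : bus -> R) (i : bus) : R :=
  (\sum_(j < n.+1) `|B i j| * Vm i * Vm j * sin (theta i - theta j)) - PL i.

(* angle differences x_theta = R_I theta, R_I = [I_{n^E-1}, -1_{n^E-1}] *)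
Definition x_theta (theta : bus -> R) : 'I_n -> R :=
  fun k => theta (widen_ord (leqnSn n) k) - theta ord_max.

Definition agc_u (r : bus) (KP : bus -> R) (KI : R) (om : bus -> R) (g : R)
  (i : bus) : R := - KP i * om i + ind (i == r) * KI * g.

Definition eps_agc_traj (HP : {set bus}) (r : bus)
  (M D Tg KP Vm : bus -> R) (B : bus -> bus -> R) (KI : R)
  (PL pH : bus -> R -> R)
  (theta om PG : bus -> R -> R) (g : R -> R) : Prop :=
  forall t : R,
    (forall i : bus,
      [/\ derivable (PG i) t 1,
          derivable (om i) t 1 & derivable (theta i) t 1] /\
      [/\ Tg i * derive1 (PG i) t
            = - PG i t + agc_u r KP KI (fun j => om j t) (g t) i,
          M i * derive1 (om i) t
            = - D i * om i t
              - power_flow B Vm (fun j => theta j t) (fun j => PL j t) i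
              + PG i t - ind (i \in HP) * pH i t
        & derive1 (theta i) t = om i t])
    /\ derivable g t 1 /\ derive1 g t = - om r t.

Definition assumption1 (HP : {set bus}) (D : bus -> R)
  (B : bus -> bus -> R) (Vm : bus -> R) : Prop :=
  forall PLbar pHbar : bus -> R,
  exists (theta_s : bus -> R) (om_com : R) (PG_s u_s : bus -> R),
    forall i : bus,
      0 = - PG_s i + u_s i /\
      0 = - D i * om_com - power_flow B Vm theta_s PLbar i + PG_s i
          - ind (i \in HP) * pHbar i.

Local Open Scope complex_scope.
Definition G_tf (r : bus) (D Tg KP : bus -> R) (KI : R) (i : bus)
  (s : R[i]) : R[i] :=
  (D i)%:C + (KP i)%:C / ((Tg i)%:C * s + 1)
  + (if i == r then (KI)%:C / (s * ((Tg i)%:C * s + 1)) else 0).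
Local Close Scope complex_scope.

Definition assumption2 (r : bus) (D Tg KP : bus -> R) (KI : R) : Prop :=
  (exists Dmin : R, 0 < Dmin /\ forall i, Dmin <= D i) /\
  forall i : bus, exists rho : R, 0 < rho /\
    forall w : R, w != 0 ->
      rho <= complex.Re (G_tf r D Tg KP KI i (Complex 0 w)).

End EPS.

(* Main.v *)
Require Import Defs.
From HB Require Import structures.
From mathcomp Require Import all_boot all_order all_algebra.
From mathcomp Require Import all_classical all_reals all_analysis.
From mathcomp Require Import complex.
From mathcomp Require Import ring lra.
Import Order.TTheory GRing.Theory Num.Theory.
Local Open Scope ring_scope.

Section Helpers.
Context {R : realType}.

Lemma Dk_pos (Dr T k rho : R) : 0 < Dr -> 0 < T -> 0 < rho ->
  (forall w : R, w != 0 -> rho <= Dr + k / (1 + w^+2 * T^+2)) -> 0 < Dr + k.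
Proof.
move=> hD hT hr H.
case: (lerP 0 k) => hk; first lra.
pose d := rho / (2 * Dr).
have hd : 0 < d by rewrite /d divr_gt0 // mulr_gt0.
pose w := Num.sqrt d / T.
have hw : w != 0 by rewrite /w mulf_neq0 // ?invr_eq0 gt_eqF // sqrtr_gt0.
have hw2 : w^+2 * T^+2 = d.
  rewrite /w exprMn -mulrA -exprMn mulVf ?gt_eqF // expr1n mulr1 sqr_sqrtr //.
  exact: ltW.
have := H w hw; rewrite hw2 => H1.
have h1d : 0 < 1 + d by lra.
have key : rho * (1 + d) <= Dr * (1 + d) + k.
  have := ler_wpM2r (ltW h1d) H1.
  by rewrite mulrDl divfK ?gt_eqF.
have hdD : d * Dr = rho / 2 by rewrite /d; field; rewrite gt_eqF.
have : 0 <= rho * d by rewrite mulr_ge0 // ltW.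
nra.
Qed.

Lemma quad_ok (Dr k : R) : 0 < Dr -> 0 < Dr + k ->
  exists eps x : R, 0 < eps /\ 0 < x /\ forall a b : R,
    0 <= (Dr - eps) * (a * a) - (1 - x * k) * (a * b) + x * (b * b).
Proof.
move=> hD hDk.
case: (ltrP 0 k) => hk.
  exists (Dr / 2), (k^-1); split; first lra.
  split; first by rewrite invr_gt0.
  move=> a b. rewrite mulVf ?gt_eqF // subrr mul0r subr0.
  have ha : 0 <= a * a by rewrite -expr2 sqr_ge0.
  have hb : 0 <= b * b by rewrite -expr2 sqr_ge0.
  apply: addr_ge0; apply: mulr_ge0 => //; first lra.
  by rewrite invr_ge0 ltW.
pose A := (Dr - k) / 2.
have hA : 0 < A by rewrite /A; lra.
exists ((Dr + k) / 2), A^-1; split; first lra.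
split; first by rewrite invr_gt0.
move=> a b.
have -> : Dr - (Dr + k) / 2 = A by rewrite /A; field.
have Q : 0 <= A * A * (a * a) - (A - k) * (a * b) + b * b.
  have h4 : 4 * (A * A * (a * a) - (A - k) * (a * b) + b * b) =
     (2 * b - (A - k) * a)^+2 + (A + k) * (3 * A - k) * (a * a) by ring.
  have hAk : 0 <= A + k by rewrite /A; lra.
  have h3 : 0 <= 3 * A - k by lra.
  have : 0 <= (2 * b - (A - k) * a)^+2 + (A + k) * (3 * A - k) * (a * a).
    have ha : 0 <= a * a by rewrite -expr2 sqr_ge0.
    by rewrite addr_ge0 ?sqr_ge0 // mulr_ge0 // mulr_ge0.
  lra.
have -> : A * (a * a) - (1 - A^-1 * k) * (a * b) + A^-1 * (b * b) =
   A^-1 * (A * A * (a * a) - (A - k) * (a * b) + b * b).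
  by field; rewrite gt_eqF.
by rewrite mulr_ge0 // invr_ge0 ltW.
Qed.
Lemma isd_add (f g : R -> R) (t df dg : R) : is_derive t 1 f df -> is_derive t 1 g dg -> is_derive t 1 (fun s => f s + g s) (df + dg).
Proof. move=> h1 h2. exact: is_deriveD. Qed.
Lemma isd_sub (f g : R -> R) (t df dg : R) : is_derive t 1 f df -> is_derive t 1 g dg -> is_derive t 1 (fun s => f s - g s) (df - dg).
Proof. move=> h1 h2. exact: is_deriveB. Qed.
Lemma isd_mul (f g : R -> R) (t df dg : R) : is_derive t 1 f df -> is_derive t 1 g dg -> is_derive t 1 (fun s => f s * g s) (f t * dg + g t * df).
Proof. move=> h1 h2. exact: is_deriveM. Qed.
Lemma isd_cos (f : R -> R) (t df : R) : is_derive t 1 f df -> is_derive t 1 (fun s => cos (f s)) (- sin (f t) * df).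
Proof. move=> h. have := is_derive1_comp (is_derive_cos (f t)) h. done. Qed.
Lemma isd_cst (c t : R) : is_derive t 1 (fun _ : R => c) 0.
Proof. exact: is_derive_cst. Qed.
Lemma isd_sum m (h : 'I_m -> R -> R) (t : R) dh : (forall i, is_derive t 1 (h i) (dh i)) ->
  is_derive t 1 (fun s => \sum_(i < m) h i s) (\sum_(i < m) dh i).
Proof. move=> H. have := is_derive_sum H.
have -> // : (\sum_(i < m) h i) = (fun s => \sum_(i < m) h i s).
apply/funext => s. by rewrite fct_sumE. Qed.
Lemma isd_of (f : R -> R) (t : R) : derivable f t 1 -> is_derive t 1 f (derive1 f t).
Proof. move=> h. rewrite derive1E. exact: derivableP. Qed.

Lemma isd_sqc (c : R) (f : R -> R) (t df : R) : is_derive t 1 f df ->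
  is_derive t 1 (fun s => c * (f s * f s) / 2) (c * f t * df).
Proof.
move=> h; apply: is_derive_eq.
rewrite -![_ *: _]/(_ * _).
field; by rewrite ?hK ?pnatr_eq0.
Qed.

Lemma isd_cosd (c : R) (f g : R -> R) (t df dg : R) : is_derive t 1 f df -> is_derive t 1 g dg ->
  is_derive t 1 (fun s => c * (1 - cos (f s - g s)) / 2) (c * sin (f t - g t) * (df - dg) / 2).
Proof.
move=> hf hg; apply: is_derive_eq.
rewrite -![_ *: _]/(_ * _).
field; by rewrite ?hK ?pnatr_eq0.
Qed.

Lemma isd_gen_nr (T K : R) (f : R -> R) (t df : R) : K != 0 -> is_derive t 1 f df ->
  is_derive t 1 (fun s => T * (f s * f s) / (2 * K)) (T * f t * df / K).
Proof.
move=> hK h; apply: is_derive_eq.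
rewrite -![_ *: _]/(_ * _).
field; by rewrite ?hK ?pnatr_eq0.
Qed.

Lemma isd_gen_r (c T x : R) (f g : R -> R) (t df dg : R) : is_derive t 1 f df -> is_derive t 1 g dg ->
  is_derive t 1 (fun s => c * (g s * g s) / 2 + T * x * ((f s - c * g s) * (f s - c * g s)) / 2)
    (c * g t * dg + T * x * (f t - c * g t) * (df - c * dg)).
Proof.
move=> hf hg; apply: is_derive_eq.
rewrite -![_ *: _]/(_ * _).
field; by rewrite ?hK ?pnatr_eq0.
Qed.

Lemma fin_bound (Q X e rho w wp : R) (b : bool) : 0 <= rho -> 0 <= X -> rho <= e ->
  Q = - X - e * (w * w) - ind R b * (w * wp) ->
  Q <= (if b then w * (- wp) - rho * w ^+ 2 else 0).
Proof.
move=> hr hX he ->; have hw : 0 <= w * w by rewrite -expr2 sqr_ge0.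
have ha : 0 <= rho * (w * w) by rewrite mulr_ge0.
have hw2 : rho * (w * w) <= e * (w * w) by rewrite ler_wpM2r.
move: hw2 ha; rewrite expr2; case: b; rewrite /ind /= ?mul1r ?mul0r ?mulrN ?subr0;
  set a := rho * _; set c := e * _; try set d := w * wp; move=> hw2 ha; lra.
Qed.
End Helpers.
Lemma reG (R : realType) n (r : 'I_n.+1) D Tg KP KI (w : R) : w != 0 ->
  complex.Re (G_tf r D Tg KP KI r (Complex 0 w)) =
   D r + (KP r - Tg r * KI) / (1 + w^+2 * Tg r ^+ 2).
Proof.
move=> w0.
rewrite /G_tf eqxx /=.
rewrite !(mul0r, mulr0, addr0, add0r, subr0, sub0r, mulrN, mulNr, opprK, oppr0).
rewrite ?add0r ?mulr1 ?sqrrN ?expr1n.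
have wp : 0 < w^+2 by rewrite lt_neqAle eq_sym sqrf_eq0 w0 sqr_ge0.
have h1 : 1 + w^+2 * Tg r ^+ 2 != 0.
  apply/lt0r_neq0. have := sqr_ge0 (Tg r). nra.
have h1' : 1 + (Tg r * w)^+2 != 0 by rewrite exprMn mulrC.
have h2 : (w * (Tg r * w))^+2 + w^+2 != 0.
  apply/lt0r_neq0. have := sqr_ge0 (w * (Tg r * w)). lra.
field.
by rewrite exprMn h1 h2.
Qed.


Theorem lemma2 (R : realType) (n : nat) (HP : {set 'I_n.+1}) (r : 'I_n.+1)
  (M D Tg KP Vm : 'I_n.+1 -> R) (B : 'I_n.+1 -> 'I_n.+1 -> R) (KI : R)
  (HM : forall i, 0 < M i) (HD : forall i, 0 < D i) (HTg : forall i, 0 < Tg i)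
  (HKP : forall i, 0 < KP i) (HVm : forall i, 0 < Vm i) (HKI : 0 < KI)
  (HBsym : forall i j, B i j = B j i)
  (HA1 : assumption1 HP D B Vm)
  (HA2 : assumption2 r D Tg KP KI) :
  exists (Ve : ('I_n -> R) -> ('I_n.+1 -> R) -> ('I_n.+1 -> R) -> R -> R)
         (rho_e : R),
    0 < rho_e /\
    (forall xth om PG g, 0 <= Ve xth om PG g) /\
    forall (pH theta om PG : 'I_n.+1 -> R -> R) (g : R -> R),
      eps_agc_traj HP r M D Tg KP Vm B KI (fun _ _ => 0) pH theta om PG g ->
      forall t : R,
        let Vt := fun s => Ve (x_theta (fun j => theta j s))
                              (fun j => om j s) (fun j => PG j s) (g s) in
        derivable Vt t 1 /\
        derive1 Vt t <= \sum_(i in HP) om i t * (- pH i t)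
                        - rho_e * \sum_(i in HP) (om i t) ^+ 2.
Proof.
case: HA2 => [[Dmin [hDm hDmi]] HA2r].
have Dk : 0 < D r + (KP r - Tg r * KI).
  have [rho [hrho Hrho]] := HA2r r.
  apply: (@Dk_pos _ _ _ _ _ (HD r) (HTg r) hrho) => w hw.
  by rewrite -reG //; exact: Hrho.
have [eps [x [heps [hx Hq]]]] := @quad_ok _ _ _ (HD r) Dk.
pose xe (xth : 'I_n -> R) (j : 'I_n.+1) : R :=
  if unlift ord_max j is Some k then xth k else 0.
pose cc i j := `|B i j| * Vm i * Vm j.
pose gen (i : 'I_n.+1) (p gg : R) := if i == r then
   KI * (gg * gg) / 2 + Tg r * x * ((p - KI * gg) * (p - KI * gg)) / 2
   else Tg i * (p * p) / (2 * KP i).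
exists (fun xth om PG gg => \sum_(i < n.+1) (M i * (om i * om i) / 2 + gen i (PG i) gg
   + \sum_(j < n.+1) cc i j * (1 - cos (xe xth i - xe xth j)) / 2)).
exists (Num.min eps Dmin).
split; first by rewrite lt_min heps hDm.
have hsq : forall y : R, 0 <= y * y by move=> y; rewrite -expr2 sqr_ge0.
split.
  move=> xth om PG gg; apply: sumr_ge0 => i _.
  apply: addr_ge0; first apply: addr_ge0.
  - by rewrite divr_ge0 // mulr_ge0 // ltW.
  - rewrite /gen; case: ifP => _.
      apply: addr_ge0; apply: divr_ge0 => //.
        exact: mulr_ge0 (ltW HKI) (hsq gg).
      exact: mulr_ge0 (mulr_ge0 (ltW (HTg r)) (ltW hx)) (hsq _).
    apply: divr_ge0; first exact: mulr_ge0 (ltW (HTg i)) (hsq _).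
    by rewrite mulr_ge0 // ltW.
  - apply: sumr_ge0 => j _; apply: divr_ge0 => //; apply: mulr_ge0.
      by rewrite /cc !mulr_ge0 // ltW.
    by rewrite subr_ge0 cos_le1.
move=> pH theta om PG g Htr t Vt.
have Hxe : forall s j, xe (x_theta (fun j => theta j s)) j = theta j s - theta ord_max s.
  move=> s j; rewrite /xe; case: unliftP => [k ->|->]; last by rewrite subrr.
  rewrite /x_theta; congr (theta _ s - _); apply: val_inj => /=.
  by rewrite /bump leqNgt ltn_ord.
have HV : Vt = fun s => \sum_(i < n.+1) (M i * (om i s * om i s) / 2 + gen i (PG i s) (g s)
   + \sum_(j < n.+1) cc i j * (1 - cos (theta i s - theta j s)) / 2).
  apply/funext => s; rewrite /Vt /=; apply: eq_bigr => i _; congr (_ + _).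
  apply: eq_bigr => j _; rewrite !Hxe.
  by rewrite (_ : theta i s - theta ord_max s - (theta j s - theta ord_max s)
     = theta i s - theta j s) //; ring.
have [Hi [Hgd Hgeq]] := Htr t.
have Hder : forall i, [/\ is_derive t 1 (om i) (derive1 (om i) t),
    is_derive t 1 (PG i) (derive1 (PG i) t) & is_derive t 1 (theta i) (om i t)].
  move=> i; have [[d1 d2 d3] [_ _ e3]] := Hi i.
  split; try exact: isd_of.
  rewrite -e3; exact: isd_of.
have Hg' : is_derive t 1 g (- om r t) by rewrite -Hgeq; exact: isd_of.
pose dgen i := if i == r then KI * g t * (- om r t) + Tg r * x * (PG r t - KI * g t)
     * (derive1 (PG r) t - KI * (- om r t))
   else Tg i * PG i t * derive1 (PG i) t / KP i.
have Hgen : forall i, is_derive t 1 (fun s => gen i (PG i s) (g s)) (dgen i).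
  move=> i; rewrite /gen /dgen; have [->|hir] := eqVneq i r.
    rewrite ?eqxx; have [_ hP _] := Hder r; exact: isd_gen_r.
  rewrite ?(negbTE hir); have [_ hP _] := Hder i.
  by apply: isd_gen_nr => //; rewrite gt_eqF.
pose dV := \sum_(i < n.+1) (M i * om i t * derive1 (om i) t + dgen i
   + \sum_(j < n.+1) cc i j * sin (theta i t - theta j t) * (om i t - om j t) / 2).
have HdV : is_derive t 1 Vt dV.
  rewrite HV; apply: isd_sum => i; apply: isd_add; first apply: isd_add.
  all: try (have [h _ _] := Hder i; exact: isd_sqc).
  all: try exact: Hgen.
  apply: isd_sum => j; have [_ _ hi] := Hder i; have [_ _ hj] := Hder j.
  exact: isd_cosd.
split; first by case: HdV.
rewrite derive1E (@derive_val _ _ _ _ _ _ _ HdV).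
pose sn i j := sin (theta i t - theta j t).
pose Pf i := \sum_(j < n.+1) cc i j * sn i j.
have HE : \sum_(i < n.+1) \sum_(j < n.+1) cc i j * sin (theta i t - theta j t) * (om i t - om j t) / 2
    = \sum_(i < n.+1) om i t * Pf i.
  have S2e : \sum_(i < n.+1) \sum_(j < n.+1) cc i j * sn i j * om j t
      = - \sum_(i < n.+1) \sum_(j < n.+1) cc i j * sn i j * om i t.
    rewrite exchange_big /= -sumrN; apply: eq_bigr => i _.
    rewrite -sumrN; apply: eq_bigr => j _.
    rewrite /sn -[theta j t - theta i t]opprB sinN /cc (HBsym j i); ring.
  rewrite (eq_bigr (fun i => (\sum_(j < n.+1) cc i j * sn i j * om i t
       - \sum_(j < n.+1) cc i j * sn i j * om j t) / 2)); last first.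
    move=> i _; rewrite -sumrB mulr_suml; apply: eq_bigr => j _; rewrite /sn; ring.
  rewrite -mulr_suml sumrB S2e opprK.
  rewrite [RHS](eq_bigr (fun i => \sum_(j < n.+1) cc i j * sn i j * om i t)); last first.
    move=> i _; rewrite /Pf mulr_sumr; apply: eq_bigr => j _; ring.
  by set S := \sum_(i < n.+1) _; field.
have e2' : forall i, M i * derive1 (om i) t
    = - D i * om i t - Pf i + PG i t - ind R (i \in HP) * pH i t.
  move=> i; have [_ [_ e2 _]] := Hi i; rewrite e2 /power_flow /= subr0.
  done.
have dP : forall i, derive1 (PG i) t
    = (- PG i t + agc_u r KP KI (fun j => om j t) (g t) i) / Tg i.
  move=> i; have [_ [e1 _ _]] := Hi i; rewrite -e1; field; by rewrite gt_eqF.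
have hrho0 : 0 <= Num.min eps Dmin by rewrite le_min !ltW.
rewrite /dV big_split /= HE -big_split /=.
rewrite mulr_sumr -sumrB [X in _ <= X]big_mkcond /=.
apply: ler_sum => i _.
have [->|hir] := eqVneq i r.
  apply: (@fin_bound _ _ ((D r - eps) * (om r t * om r t)
      - (1 - x * (KP r - Tg r * KI)) * (om r t * (PG r t - KI * g t))
      + x * ((PG r t - KI * g t) * (PG r t - KI * g t))) eps).
  - exact: hrho0.
  - exact: Hq.
  - by rewrite ge_min lexx.
  rewrite /dgen eqxx (_ : M r * om r t * derive1 (om r) t = om r t * (M r * derive1 (om r) t)); last by ring.
  rewrite e2' dP /agc_u eqxx.
  rewrite (_ : ind R true = 1) //; field; by rewrite gt_eqF.
apply: (@fin_bound _ _ (PG i t * PG i t / KP i) (D i)).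
- exact: hrho0.
- by apply: divr_ge0; [exact: hsq | exact: ltW].
- by rewrite (le_trans _ (hDmi i)) // ge_min lexx orbT.
rewrite /dgen (negbTE hir) (_ : M i * om i t * derive1 (om i) t = om i t * (M i * derive1 (om i) t)); last by ring.
rewrite e2' dP /agc_u (negbTE hir).
rewrite (_ : ind R false = 0) //; field; by rewrite !gt_eqF.

Qed.
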